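(* For every $n\geq 1$, the Fibonacci-sum set-graph $G^F_{A^{(n)}}$ is Hamiltonian.
   Context: Let $\mathcal{F}=\{f_m\}_{m\ge 0}$ be the Fibonacci numbers, $f_0=0$, $f_1=1$, $f_m=f_{m-1}+f_{m-2}$. For $n\in\mathbb{N}$ let $A^{(n)}=\{1,2,\dots,n\}$. The Fibonacci-sum set-graph $G^F_{A^{(n)}}$ is the multigraph (loops and multiple edges allowed) whose vertices are in bijection with the nonempty subsets of $A^{(n)}$; between the vertices corresponding to distinct subsets $S,T$ there is one edge for each pair $(i',j')$ with $i'\in S$, $j'\in T$, $i'\neq j'$ and $i'+j'\in\mathcal{F}$, and at the vertex corresponding to $S$ there is one loop for each pair of distinct elements $i',j'\in S$ with $i'+j'\in\mathcal{F}$. *)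

(* Defs.v *)
From mathcomp Require Import all_boot.
Set Implicit Arguments. Unset Strict Implicit. Unset Printing Implicit Defensive.

Fixpoint fib (m : nat) : nat :=
  match m with
  | 0 => 0
  | 1 => 1
  | (m'.+1 as p).+1 => fib p + fib m'
  end.

(* k is a Fibonacci number.  Since fib m >= m - 1, any m with fib m = k
   satisfies m <= k + 1, so the bounded search is exactly "exists m, fib m = k". *)
Definition is_fib (k : nat) : bool := [exists m : 'I_(k.+2), fib m == k].

(* A^(n) = {1,...,n} is represented by 'I_n, the ordinal i standing for i+1.
   Vertices of the set-graph: nonempty subsets of A^(n). *)
Definition fvertex (n : nat) := {S : {set 'I_n} | S != set0}.

Definition fib_edges (n : nat) (S T : {set 'I_n}) : nat :=
  #|[set p : 'I_n * 'I_n | [&& p.1 \in S, p.2 \in T, p.1 != p.2 &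
                              is_fib (p.1.+1 + p.2.+1)]]|.

(* Number of loops at the vertex of S: unordered pairs of distinct elements of S
   with Fibonacci sum (irrelevant to Hamiltonicity, recorded for completeness). *)
Definition fib_loops (n : nat) (S : {set 'I_n}) : nat :=
  #|[set p : 'I_n * 'I_n | [&& p.1 \in S, p.2 \in S, p.1 < p.2 &
                              is_fib (p.1.+1 + p.2.+1)]]|.

Definition GF_mult (n : nat) (x y : fvertex n) : nat := fib_edges (val x) (val y).

(* A one-vertex graph is (trivially)
   Hamiltonian; a 2-vertex Hamiltonian cycle needs two parallel edges; for
   >= 3 vertices it is a cyclic ordering of all vertices with consecutive
   vertices adjacent. *)
Definition hamiltonian (T : finType) (em : T -> T -> nat) : Prop :=
  #|T| <= 1 \/
  (#|T| = 2 /\ forall x y : T, x != y -> 2 <= em x y) \/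
  (3 <= #|T| /\ exists s : seq T,
      [/\ uniq s, (forall x, x \in s) & cycle (fun x y => 0 < em x y) s]).

(* Main.v *)
Require Import Defs.
From mathcomp Require Import all_boot.
From mathcomp Require Import zify.

Set Implicit Arguments. Unset Strict Implicit. Unset Printing Implicit Defensive.

Lemma fib_SS k : fib k.+2 = fib k.+1 + fib k.
Proof. by []. Qed.

Lemma fib_ge2 k : k <= fib k.+1 /\ k.+1 <= fib k.+2.
Proof.
elim: k => [|k [IH1 IH2]]; first by split.
split; first by [].
rewrite fib_SS; case: k IH1 IH2 => [|k] IH1 IH2; first by [].
lia.
Qed.

Lemma fib_ge k : k <= (fib k).+1.
Proof. case: k => [|k] //; have [h _] := fib_ge2 k; lia. Qed.

Lemma fib_mono k : fib k <= fib k.+1.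
Proof. case: k => [|k] //; rewrite fib_SS; lia. Qed.

Lemma fib_pos k : 0 < fib k.+1.
Proof. elim: k => [|k IH] //; rewrite fib_SS; lia. Qed.

Lemma is_fib_fib k : is_fib (fib k).
Proof.
apply/existsP; have hk : k < (fib k).+2 by have := fib_ge k; lia.
by exists (Ordinal hk).
Qed.

Lemma partner v : 2 <= v -> exists2 w, 0 < w < v & is_fib (v + w).
Proof.
move=> v2.
have ex : exists k, v < fib k.
  by exists v.+2; have [_ h] := fib_ge2 v; lia.
case: (ex_minnP ex) => k hk hmin.
case: k hk hmin => [|[|[|[|j]]]] hk hmin; try by (move: hk => /=; lia).
have h3 : fib j.+3 <= v.
  by rewrite leqNgt; apply/negP => /hmin; lia.
have hpos := fib_pos j.
have hlt : fib j.+2 < fib j.+3 by rewrite (fib_SS j.+1); lia.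
exists (fib j.+4 - v).
  by rewrite (fib_SS j.+2) in hk *; lia.
have -> : v + (fib j.+4 - v) = fib j.+4 by lia.
exact: is_fib_fib.
Qed.

Lemma pick_q n m (mn : m < n) : 1 < m ->
  exists q : 'I_n, [/\ q < m, q != Ordinal mn & is_fib (q.+1 + m.+1)].
Proof.
move=> hm.
have [w /andP[w0 wm] fw] := partner (v := m.+1) (ltac:(lia)).
have qn : w.-1 < n by lia.
exists (Ordinal qn); split => /=.
- lia.
- by rewrite -val_eqE /=; lia.
- by rewrite (_ : w.-1.+1 + m.+1 = m.+1 + w) //; lia.
Qed.

Lemma pick_r n m (z : 'I_n) : 1 < m -> m <= n -> z < m ->
  exists r : 'I_n, [/\ r < m, r != z & is_fib (r.+1 + z.+1)].
Proof.
move=> hm mn zm.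
case z0: (val z == 0).
  have h1 : 1 < n by lia.
  exists (Ordinal h1); split => //=.
    by rewrite -val_eqE /= (eqP z0).
  by rewrite (eqP z0); exact: (is_fib_fib 4).
have zpos : 0 < z by rewrite lt0n z0.
have [w' /andP[w'0 w'z] fw'] := partner (v := z.+1) (ltac:(lia)).
have h1 : w'.-1 < n by lia.
exists (Ordinal h1); split => /=.
- lia.
- by rewrite -val_eqE /=; lia.
- by rewrite (_ : w'.-1.+1 + z.+1 = z.+1 + w') //; lia.
Qed.

Section Main.
Variable n : nat.

Definition U m : {set 'I_n} := [set i : 'I_n | i < m].
Definition adj (S T : {set 'I_n}) : bool := 0 < fib_edges S T.

Lemma adjI (S T : {set 'I_n}) (i j : 'I_n) :
  i \in S -> j \in T -> i != j -> is_fib (i.+1 + j.+1) -> adj S T.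
Proof.
move=> iS jT ij f; apply/card_gt0P; exists (i, j); rewrite inE /=.
by rewrite iS jT ij f.
Qed.

Lemma setU1_inj (a : 'I_n) (A B : {set 'I_n}) : a \notin A -> a \notin B -> a |: A = a |: B -> A = B.
Proof. by move=> hA hB e; rewrite -(setU1K hA) e setU1K. Qed.

Section Path.
Variables vm q : 'I_n.
Hypothesis qvm : q != vm.
Hypothesis fqvm : is_fib (q.+1 + vm.+1).

Fixpoint mkpath (L : seq {set 'I_n}) : seq {set 'I_n} :=
  if L is W :: L' then (vm |: W) :: (vm |: (q |: W)) :: mkpath L' else [::].

Lemma mkpath_path (X : {set 'I_n}) L : q \in X -> path adj X (mkpath L).
Proof.
elim: L X => [|W L IH] X qX //=.
apply/and3P; split.
- by apply: (adjI qX (setU11 _ _)) => //.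
- apply: (adjI (setU11 _ _) (j := q)); first by rewrite !inE eqxx orbT.
  + by rewrite eq_sym.
  + by rewrite addnC.
- by apply: IH; rewrite !inE eqxx orbT.
Qed.

Lemma mem_mkpath (x : {set 'I_n}) L :
  (x \in mkpath L) = has (fun W : {set 'I_n} => (x == vm |: W) || (x == vm |: (q |: W))) L.
Proof. by elim: L => [|W L IH] //=; rewrite !inE IH orbA. Qed.

Lemma mkpath_cat (L1 L2 : seq {set 'I_n}) : mkpath (L1 ++ L2) = mkpath L1 ++ mkpath L2.
Proof. by elim: L1 => [|W L IH] //=; rewrite IH. Qed.

Lemma uniq_mkpath (L : seq {set 'I_n}) : uniq L -> all (fun W : {set 'I_n} => (vm \notin W) && (q \notin W)) L ->
  uniq (mkpath L).
Proof.
elim: L => [|W L IH] //= /andP[WL uL] /andP[/andP[vW qW] aL].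
rewrite IH // andbT !inE !mem_mkpath negb_or -andbA; apply/and3P; split.
- apply/eqP => /setP /(_ q); rewrite !inE eqxx orbT (negbTE qvm) /=.
  by rewrite (negbTE qW).
- apply/hasP => -[W' W'L /orP[] /eqP e].
    have ee := setU1_inj vW _ e.
    move/allP: aL => /(_ _ W'L) /andP[vW' _].
    by rewrite (ee vW') W'L in WL.
  move/setP: e => /(_ q); rewrite !inE eqxx orbT (negbTE qvm) /=.
  by rewrite (negbTE qW).
- apply/hasP => -[W' W'L /orP[] /eqP e].
    move/allP: aL => /(_ _ W'L) /andP[vW' qW'].
    move/setP: e => /(_ q); rewrite !inE eqxx orbT (negbTE qvm) /=.
    by rewrite (negbTE qW').
  move/allP: aL => /(_ _ W'L) /andP[vW' qW'].
  have vqW : vm \notin q |: W by rewrite !inE negb_or eq_sym qvm.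
  have vqW' : vm \notin q |: W' by rewrite !inE negb_or eq_sym qvm.
  have e1 := setU1_inj vqW vqW' e.
  have e2 := setU1_inj qW qW' e1.
  by rewrite e2 W'L in WL.
Qed.

End Path.


Lemma main (n2 : 1 < n) m : 2 <= m -> m <= n ->
  exists s : seq {set 'I_n}, [/\ uniq s,
    forall S, (S \in s) = (S != set0) && (S \subset U m),
    cycle adj s & 3 <= size s].
Proof.
elim: m => [|m IH] // m2 mn.
case: (ltngtP m 1) => [m0 | hm | m1]; first by lia.
-
  have [s [us ms cs ss]] := IH hm (ltnW mn).
  pose vm := Ordinal mn.
  have [q [qm qvm fq0]] := pick_q mn hm.
  have fq : is_fib (q.+1 + vm.+1) by [].
  pose Fm := U m.
  have n0 : 0 < n := leq_ltn_trans (leq0n m) mn.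
  have Fms : Fm \in s.
    by rewrite ms subxx andbT; apply/set0Pn; exists (Ordinal n0); rewrite inE /= (ltnW hm).
  case: (rot_to Fms) => i s' e.
  have := ss; rewrite -(size_rot i) e /= => hs'.
  case: s' e hs' => [|Z s''] e hs' //.
  have Zs : Z \in s by rewrite -(mem_rot i) e !inE eqxx orbT.
  have := Zs; rewrite ms => /andP[/set0Pn[z zZ] ZU].
  have zm : z < m by have := subsetP ZU z zZ; rewrite inE.
  have [r [rm rz fr]] := pick_r hm (ltnW mn) zm.
  pose L := [seq W : {set 'I_n} <- enum {set 'I_n} | (W \subset U m) && (q \notin W)].
  have memL W : (W \in L) = (W \subset U m) && (q \notin W).
    by rewrite mem_filter mem_enum andbT.
  pose W0 := [set r] :\ q.
  have W0L : W0 \in L.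
    rewrite memL !inE eqxx /= andbT; apply/subsetP => x; rewrite !inE.
    by case/andP => _ /eqP ->.
  pose L' := rcons (rem W0 L) W0.
  have pL : perm_eq L L'.
    apply: perm_trans (perm_to_rem W0L) _.
    by rewrite perm_sym /L' perm_rcons.
  pose P := mkpath vm q L'.
  have pt : perm_eq (Fm :: P ++ Z :: s'') (P ++ Fm :: Z :: s'').
    by rewrite -cat1s perm_catCA.
  have vmU x : x \in s -> vm \notin x.
    move=> xs; move: xs; rewrite ms => /andP[_ xU].
    by apply/negP => /(subsetP xU); rewrite inE /= ltnn.
  exists (Fm :: P ++ Z :: s''); split.
  + rewrite (perm_uniq pt) cat_uniq -e rot_uniq us andbT.
    apply/andP; split.
      apply: uniq_mkpath => //.
        by rewrite -(perm_uniq pL) filter_uniq // enum_uniq.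
      apply/allP => W; rewrite -(perm_mem pL) memL => /andP[WU qW].
      rewrite qW andbT; apply/negP => /(subsetP WU); rewrite inE /= ltnn //.
    apply/hasPn => x; rewrite mem_rot => xs /=.
    have vx := vmU x xs.
    rewrite mem_mkpath; apply/hasPn => W _; rewrite negb_or.
    by apply/andP; split; apply/eqP => ex; rewrite ex !inE eqxx in vx.
  + move=> S; rewrite (perm_mem pt) mem_cat -e mem_rot mem_mkpath.
    case: (boolP (vm \in S)) => vS.
    * have -> : S \in s = false.
        by apply/negP => /vmU; rewrite vS.
      have -> : S != set0 by apply/set0Pn; exists vm.
      rewrite orbF /=.
      apply/idP/idP.
        case/hasP => W; rewrite -(perm_mem pL) memL => /andP[WU qW].
        move=> /orP[]/eqP->; apply/subsetP => x; rewrite !inE.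
          case/orP => [/eqP->|/(subsetP WU)]; first exact: ltnSn.
          by rewrite inE => h; exact: ltnW h.
        case/orP => [/eqP->|/orP[/eqP->|/(subsetP WU)]]; first exact: ltnSn.
          exact: ltnW qm.
        by rewrite inE => h; exact: ltnW h.
      move=> SU; apply/hasP; exists (S :\ vm :\ q).
        rewrite -(perm_mem pL) memL !inE eqxx /= andbT.
        apply/subsetP => x; rewrite !inE => /and3P[xq xv xS].
        have := subsetP SU x xS; rewrite inE.
        move: xv; rewrite -val_eqE /= => xv h.
        by rewrite ltn_neqAle xv /=; exact: h.
      case: (boolP (q \in S)) => qS; apply/orP; [right|left];
        apply/eqP/setP => x; rewrite !inE;
        (case xv: (x == vm); first by rewrite (eqP xv) vS);
        case xq: (x == q) => //.
        by rewrite (eqP xq) qS orbT.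
      by rewrite (eqP xq) (negbTE qS).
    * have -> : has (fun W : {set 'I_n} => (S == vm |: W) || (S == vm |: (q |: W))) L' = false.
        by apply/hasP => -[W _ /orP[]/eqP Se]; rewrite Se !inE eqxx in vS.
      rewrite /= ms; congr (_ && _).
      apply/idP/idP => /subsetP sub; apply/subsetP => x xS; have := sub x xS; rewrite !inE.
        by move=> h; exact: ltnW h.
      have : x != vm by apply: contraNneq vS => <-.
      rewrite -val_eqE /= => xv h.
      by rewrite ltn_neqAle xv /=; exact: h.
  + have oc : cycle adj (Fm :: Z :: s'') by rewrite -e rot_cycle.
    move: oc; rewrite /= rcons_cat cat_path => /andP[aFZ pZ].
    rewrite mkpath_path //=; last by rewrite inE /=.
    rewrite /P /L' -cats1 mkpath_cat last_cat /= pZ andbT.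
    apply: (adjI (i := r) (j := z)) => //.
    by rewrite !inE eqxx andbT; case: (r == q); rewrite ?orbT.
  + move: hs'; rewrite /= size_cat /=; clear; lia.
-
  subst m.
  have h0 : 0 < n by lia.
  have h1 : 1 < n by lia.
  pose i0 := Ordinal h0; pose i1 := Ordinal h1.
  have ne01 : (i0 == i1) = false by rewrite -val_eqE.
  have ne10 : (i1 == i0) = false by rewrite -val_eqE.
  exists [:: [set i0]; [set i1]; [set i0; i1]]; split.
  + rewrite /= !inE !andbT negb_or; apply/andP; split; [apply/andP; split|].
    * by apply/negP => /eqP/setP/(_ i0); rewrite !inE eqxx ne01.
    * by apply/negP => /eqP/setP/(_ i1); rewrite !inE eqxx ne10 orbT.
    * by apply/negP => /eqP/setP/(_ i0); rewrite !inE eqxx ne01.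
  + move=> S; apply/idP/idP.
      rewrite !inE => /or3P[]/eqP->; apply/andP; split.
      * by apply/set0Pn; exists i0; rewrite inE.
      * by rewrite sub1set inE.
      * by apply/set0Pn; exists i1; rewrite inE.
      * by rewrite sub1set inE.
      * by apply/set0Pn; exists i0; rewrite !inE eqxx.
      * by rewrite subUset !sub1set !inE.
    case/andP => ne sub.
    have key x : x \in S -> (x == i0) || (x == i1).
      move=> /(subsetP sub); rewrite inE => lt2.
      rewrite -!val_eqE /=; move: lt2; clear; lia.
    rewrite !inE.
    case: (boolP (i0 \in S)) => S0; case: (boolP (i1 \in S)) => S1.
    * suff -> : S = [set i0; i1] by rewrite eqxx !orbT.
      apply/setP => x; rewrite !inE; apply/idP/idP => [/key //|/orP[]/eqP-> //].
    * suff -> : S = [set i0] by rewrite eqxx.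
      apply/setP => x; rewrite !inE; apply/idP/idP => [xS|/eqP-> //].
      by case/orP: (key x xS) => // /eqP ex; rewrite -ex xS in S1.
    * suff -> : S = [set i1] by rewrite eqxx orbT.
      apply/setP => x; rewrite !inE; apply/idP/idP => [xS|/eqP-> //].
      by case/orP: (key x xS) => // /eqP ex; rewrite -ex xS in S0.
    * case/set0Pn: ne => x xS.
      by case/orP: (key x xS) => /eqP ex; rewrite -ex xS in S0 S1.
  + rewrite /= !andbT; apply/and3P; split.
    * by apply: (adjI (i := i0) (j := i1)); rewrite ?inE ?ne01 //; exact: (is_fib_fib 4).
    * by apply: (adjI (i := i1) (j := i0)); rewrite ?inE ?ne10 ?eqxx ?orbT //; exact: (is_fib_fib 4).
    * by apply: (adjI (i := i1) (j := i0)); rewrite ?inE ?ne10 ?eqxx ?orbT //; exact: (is_fib_fib 4).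
  + by [].
Qed.

End Main.

Theorem corollary2p3 (n : nat) : 1 <= n -> hamiltonian (@GF_mult n).
Proof.
move=> n1.
case: (ltngtP n 1) => [n0|n2|e]; first by move: n1 n0; clear; lia.
- right; right.
  have [s [us ms cs ss]] := main n2 (leqnn 2) n2.
  have [s' [us' ms' cs' ss']] := main n2 n2 (leqnn n).
  pose t := pmap (insub : {set 'I_n} -> option (fvertex n)) s'.
  have mt : map val t = s'.
    rewrite pmap_filter; last exact: insubK.
    apply/all_filterP/allP => x xs; move: xs; rewrite ms' => /andP[ne _].
    by rewrite insubT.
  have sz : size t = size s' by rewrite -mt size_map.
  have ut : uniq t by rewrite -(map_inj_uniq val_inj) mt.
  have allt (x : fvertex n) : x \in t.
    rewrite -(mem_map val_inj) mt ms' (valP x) /=.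
    by apply/subsetP => i _; rewrite inE ltn_ord.
  split.
    rewrite -sz in ss'; apply: leq_trans ss' _.
    rewrite cardE; apply: uniq_leq_size => // x _; by rewrite mem_enum.
  exists t; split => //.
  by move: cs'; rewrite -mt cycle_map.
- left; subst n.
  apply/card_le1_eqP => x y _ _.
  apply: val_inj.
  have one (z : fvertex 1) : val z = setT.
    apply/setP => i; rewrite inE; case/set0Pn: (valP z) => j jz.
    by rewrite (_ : i = j) // ; apply: val_inj; case: i j {jz} => [[|?] ?] [[|?] ?].
  by rewrite !one.
Qed.
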